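(* Let $n\ge2$ and $\rho=1-\frac1n$, and consider $x_k - C_n^1\rho\, x_{k-1} + \dots + (-1)^n\rho^n x_{k-n}=0$ (characteristic polynomial $(\lambda-\rho)^n$) with $x^{(0)}=(0,\dots,0,1)$. Then $x_k=C_k^{n-1}\rho^{k-n+1}$, the maximum of $x_k$ over $k\ge n-1$ is attained at $k=n^2-n-1$ (and also at $k=n^2-n$), and $$\max_{k\ge n-1}x_k=C_{n^2-n-1}^{\,n^2-2n}\left(1-\tfrac1n\right)^{n^2-2n}.$$
   Context: $C_p^q=\frac{p!}{q!(p-q)!}$. *)

(* Defs.v *)
From HB Require Import structures.
From mathcomp Require Import all_boot all_order all_algebra.
Set Implicit Arguments. Unset Strict Implicit. Unset Printing Implicit Defensive.
Import Order.TTheory GRing.Theory Num.Theory.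
Local Open Scope ring_scope.

Definition rho (R : realFieldType) (n : nat) : R := 1 - (n%:R)^-1.

Definition satisfies_rec (R : realFieldType) (n : nat) (x : nat -> R) : Prop :=
  forall k : nat, (n <= k)%N ->
    \sum_(j < n.+1) (-1) ^+ j * ('C(n, j))%:R * (rho R n) ^+ j * x (k - j)%N = 0.

(* Initial vector x^(0) = (x_0, ..., x_{n-1}) = (0, ..., 0, 1). *)
Definition initial_cond (R : realFieldType) (n : nat) (x : nat -> R) : Prop :=
  (forall i : nat, (i < n.-1)%N -> x i = 0) /\ x n.-1 = 1.

(* Main.v *)
Require Import Defs.
From HB Require Import structures.
From mathcomp Require Import all_boot all_order all_algebra.
From mathcomp Require Import zify ring lra.
Import Order.TTheory GRing.Theory Num.Theory.
Local Open Scope ring_scope.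

Section S.
Variable R : realFieldType.
Definition S (n k m : nat) : R :=
  \sum_(j < n.+1) (-1) ^+ j * ('C(n, j))%:R * ('C(k - j, m))%:R.

Lemma S_step n k m : S n.+1 k m = S n k m - S n k.-1 m.
Proof.
rewrite /S big_ord_recl [in RHS]big_ord_recl /=.
pose B := fun i : nat => (-1 : R) ^+ i * ('C(n, i.+1))%:R * ('C(k - i.+1, m))%:R.
pose A := fun i : nat => (-1 : R) ^+ i * ('C(n, i))%:R * ('C(k.-1 - i, m))%:R.
rewrite (eq_bigr (fun i : 'I_n.+1 => - A i - B i)); last first.
  move=> i _; rewrite /A /B /bump /= add1n binS natrD exprS (_ : (k - i.+1 = k.-1 - i)%N); [ring|lia].
rewrite [\sum_(i < n) _](eq_bigr (fun i : 'I_n => - B i)); last first.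
  move=> i _; rewrite /B /bump /= add1n exprS; ring.
rewrite sumrB [X in _ + (_ - X)]big_ord_recr /= {2}/B (bin_small (ltnSn n)) !(mul0r,mulr0) addr0.
rewrite !sumrN !subn0 !bin0 /A; ring.
Qed.

Lemma S_pascal n k m : (n < k)%N -> S n k m.+1 - S n k.-1 m.+1 = S n k.-1 m.
Proof.
move=> nk; rewrite /S -sumrB; apply: eq_bigr => j _.
have jn := ltn_ord j.
rewrite (_ : (k - j = (k.-1 - j).+1)%N); last by lia.
rewrite binS natrD; ring.
Qed.

Lemma S0 n k : S n k 0 = S n k.-1 0.
Proof. by apply: eq_bigr => j _; rewrite !bin0. Qed.

Lemma S_zero n : forall k m, (m < n)%N -> (n <= k)%N -> S n k m = 0.
Proof.
elim: n => [//|n IH] k m mn nk.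
rewrite S_step.
case: m mn => [|m] mn; first by rewrite S0 subrr.
rewrite S_pascal; last by lia.
apply: IH; lia.
Qed.
End S.

Lemma e1 n k : (2 <= n)%N -> (n.-1 <= k)%N -> (k <= n ^ 2 - n - 1)%N ->
  (k.+1 * n.-1 = (k.+1 - n.-1) * n + (n ^ 2 - n - 1 - k))%N.
Proof.
case: n => [|[|p]] //= _ h1 h2.
have [q ek] : exists q, k = (p.+1 + q)%N by exists (k - p.+1)%N; lia.
subst k.
rewrite -mulnn in h2 *.
rewrite (_ : ((p.+1 + q).+1 - p.+1 = q.+1)%N); last lia.
have [r er] : exists r, (p.+2 * p.+2 - p.+2 - 1 = p.+1 + q + r)%N by exists (p.+2 * p.+2 - p.+2 - 1 - (p.+1+q))%N; lia.
rewrite er (_ : (p.+1 + q + r - (p.+1 + q) = r)%N); last lia.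
have e2 : (p.+2 * p.+2 - p.+2 - 1 = p * p + 3 * p + 1)%N by nia.
rewrite e2 in er. nia.
Qed.
Lemma e3 n k : (2 <= n)%N -> (n ^ 2 - n - 1 <= k)%N ->
  ((k.+1 - n.-1) * n = k.+1 * n.-1 + (k - (n ^ 2 - n - 1)))%N.
Proof.
case: n => [|[|p]] //= _ h2.
rewrite -mulnn in h2 *.
have e2 : (p.+2 * p.+2 - p.+2 - 1 = p * p + 3 * p + 1)%N by nia.
rewrite e2 in h2 *.
have [q ek] : exists q, k = (p * p + 3 * p + 1 + q)%N by exists (k - (p * p + 3 * p + 1))%N; lia.
subst k.
rewrite (_ : ((p * p + 3 * p + 1 + q).+1 - p.+1 = p * p + 2 * p + 1 + q)%N); last lia.
rewrite (_ : (p * p + 3 * p + 1 + q - (p * p + 3 * p + 1) = q)%N); last lia.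
nia.
Qed.

Section M.
Variable R : realFieldType.
Variable n : nat.
Hypothesis n2 : (2 <= n)%N.

Definition y (k : nat) : R := ('C(k, n.-1))%:R * (rho R n) ^+ (k - n.-1)%N.

Lemma n0 : (n%:R : R) != 0.
Proof. by rewrite pnatr_eq0; lia. Qed.

Lemma npred : (n.-1)%:R = n%:R - 1 :> R.
Proof. have e : (n = n.-1 + 1)%N by lia. by rewrite [in RHS]e natrD addrK. Qed.

Lemma rho_eq : rho R n = (n.-1)%:R / n%:R.
Proof. rewrite /rho npred; field; exact: n0. Qed.

Lemma rho_ge0 : 0 <= rho R n.
Proof. by rewrite rho_eq divr_ge0. Qed.

Lemma y_ge0 k : 0 <= y k.
Proof. by rewrite /y mulr_ge0 // exprn_ge0 // rho_ge0. Qed.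

Lemma y_rec k : (n <= k)%N ->
  \sum_(j < n.+1) (-1) ^+ j * ('C(n, j))%:R * (rho R n) ^+ j * y (k - j)%N = 0.
Proof.
move=> nk.
rewrite (eq_bigr (fun j : 'I_n.+1 => (rho R n) ^+ (k - n.-1) *
   ((-1) ^+ j * ('C(n, j))%:R * ('C(k - j, n.-1))%:R))); last first.
  move=> j _; have jn := ltn_ord j; rewrite /y.
  case: (leqP n.-1 (k - j)) => h.
    rewrite (_ : (k - n.-1 = j + (k - j - n.-1))%N); last by lia.
    rewrite exprD; ring.
  rewrite (bin_small h); ring.
rewrite -big_distrr -/(S R n k n.-1) S_zero /=; [exact: mulr0| lia | lia].
Qed.

Lemma y_uniq (x : nat -> R) : satisfies_rec n x -> initial_cond n x -> forall k, x k = y k.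
Proof.
move=> hr [hi1 hi2].
elim/ltn_ind => k IH.
case: (ltnP k n) => kn.
  rewrite /y; case: (ltnP k n.-1) => h.
    by rewrite hi1 // bin_small // mul0r.
  have -> : k = n.-1 by lia.
  by rewrite hi2 binn subnn expr0 mulr1.
have hx := hr k kn; have hy := @y_rec k kn.
rewrite big_ord_recl /= in hx; rewrite big_ord_recl /= in hy.
rewrite (eq_bigr (fun j : 'I_n => (-1) ^+ bump 0 j * ('C(n, bump 0 j))%:R * rho R n ^+ bump 0 j * y (k - bump 0 j))) in hx; last first.
  move=> j _; rewrite IH //; rewrite /bump /=; lia.
rewrite !expr0 !bin0 !subn0 !mul1r in hx hy.
lra.
Qed.

Lemma y_ratio k : (n.-1 <= k)%N ->
  y k.+1 * ((k.+1 - n.-1) * n)%:R = y k * (k.+1 * n.-1)%:R.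
Proof.
move=> kn.
have hb := mul_bin_down k.+1 n.-1; rewrite /= in hb.
have hr : rho R n * n%:R = (n.-1)%:R by rewrite rho_eq divfK // n0.
rewrite /y (_ : (k.+1 - n.-1 = (k - n.-1).+1)%N); last by lia.
rewrite exprS !natrM.
have hb' : ('C(k.+1, n.-1))%:R * ((k - n.-1).+1)%:R = (k.+1)%:R * ('C(k, n.-1))%:R :> R.
  rewrite -!natrM; congr (_%:R); rewrite hb (_ : ((k - n.-1).+1 = k.+1 - n.-1)%N); last by lia.
  by rewrite mulnC.
rewrite -hr.
transitivity (('C(k.+1, n.-1))%:R * ((k - n.-1).+1)%:R * rho R n ^+ (k - n.-1) * rho R n * n%:R); first ring.
rewrite hb'; ring.
Qed.

Definition N := (n ^ 2 - n - 1)%N.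

Lemma y_inc k : (n.-1 <= k)%N -> (k < N)%N -> y k <= y k.+1.
Proof.
move=> h1 h2.
have e := @e1 n k n2 h1 (ltnW h2).
have hD : (0 < (k.+1 - n.-1) * n)%N by rewrite muln_gt0; apply/andP; split; lia.
have := @y_ratio _ h1; rewrite e natrD.
move: hD; rewrite -(ltr0n R) => hD.
have := y_ge0 k; have := ler0n R (n ^ 2 - n - 1 - k).
set D := ((k.+1 - n.-1) * n)%:R; set E := (_ - k)%:R.
move=> hE hy hr; nra.
Qed.

Lemma y_dec k : (N <= k)%N -> y k.+1 <= y k.
Proof.
move=> h2.
have h1 : (n.-1 <= k)%N by move: h2; rewrite /N -mulnn; nia.
have e := @e3 n k n2 h2.
have hD : (0 < (k.+1 - n.-1) * n)%N by rewrite muln_gt0; apply/andP; split; lia.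
have := @y_ratio _ h1; rewrite e natrD.
move: hD; rewrite -(ltr0n R) e natrD => hD.
have := y_ge0 k; have := ler0n R (k - (n ^ 2 - n - 1)).
set C := (k.+1 * n.-1)%:R; set E := (k - _)%:R.
move=> hE hy hr; nra.
Qed.

Lemma y_eqN : y N.+1 = y N.
Proof.
have h1 : (n.-1 <= N)%N by rewrite /N -mulnn; nia.
have e := @e3 n N n2 (leqnn N); rewrite {3}/N subnn addn0 in e.
have hD : (0 < (N.+1 - n.-1) * n)%N by rewrite muln_gt0; apply/andP; split; lia.
have := @y_ratio _ h1; rewrite e.
move: hD; rewrite -(ltr0n R) e => hD hr.
by apply: (mulIf (lt0r_neq0 hD)).
Qed.

Lemma y_max k : (n.-1 <= k)%N -> y k <= y N.
Proof.
move=> hk; case: (leqP k N) => hkN.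
  have : forall d, (d <= N - n.-1)%N -> y (N - d) <= y N.
    elim=> [|d IH] hd; first by rewrite subn0.
    apply: le_trans (IH (ltnW hd)).
    rewrite (_ : (N - d = (N - d.+1).+1)%N); last lia.
    apply: y_inc; lia.
  move=> /(_ (N - k)%N); rewrite subKn //; apply; lia.
have : forall d, y (N + d) <= y N.
  elim=> [|d IH]; first by rewrite addn0.
  apply: le_trans IH; rewrite addnS; apply: y_dec; lia.
by move=> /(_ (k - N)%N); rewrite subnKC //; lia.
Qed.
End M.

Theorem mainTheorem6 (R : realFieldType) (n : nat) (x : nat -> R) :
  (2 <= n)%N ->
  satisfies_rec n x ->
  initial_cond n x ->
  (forall k : nat, x k = ('C(k, n.-1))%:R * (rho R n) ^+ (k - n.-1)%N)
  /\ (forall k : nat, (n.-1 <= k)%N -> x k <= x (n ^ 2 - n - 1)%N)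
  /\ x (n ^ 2 - n)%N = x (n ^ 2 - n - 1)%N
  /\ x (n ^ 2 - n - 1)%N
     = ('C(n ^ 2 - n - 1, n ^ 2 - 2 * n))%:R * (1 - (n%:R)^-1) ^+ (n ^ 2 - 2 * n).
Proof.
move=> n2 hr hi.
have hy := @y_uniq R n n2 x hr hi.
have hN : (n ^ 2 - n = (N n).+1)%N by rewrite /N -mulnn; nia.
split; first by move=> k; rewrite hy.
split; first by move=> k hk; rewrite !hy; exact: y_max.
split; first by rewrite !hy hN subn1 /=; exact: (@y_eqN R n n2).
rewrite hy /y /rho.
have e : (n ^ 2 - n - 1 - n.-1 = n ^ 2 - 2 * n)%N by rewrite -mulnn; nia.
have h1 : (n.-1 <= n ^ 2 - n - 1)%N by rewrite -mulnn; nia.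
by rewrite e -e bin_sub.
Qed.
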